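(* For any integer $d\ge2$, any $\Gamma\in\mathcal{L}_d$ and any $Q\in\mathcal{R}_d$ we have $|\Gamma_0|\le 2d-2$, $|\Gamma_1|\le 3d-3$, $|Q_0|\le5(d-1)$ and $|Q_1|\le 6(d-1)$. In particular $\mathcal{L}_d$ and $\mathcal{R}_d$ are finite.
   Context: For an undirected multigraph $\Gamma$ (vertex set $\Gamma_0$, edge set $\Gamma_1$), $\chi(\Gamma)=|\Gamma_1|-|\Gamma_0|+(\text{number of connected components})$. A connected graph with at least one edge is prime if it is not the union of two full proper subgraphs having exactly one common vertex. $\mathcal{L}_d$ is the set of prime graphs $\Gamma$ with $\chi(\Gamma)=d$ in which every vertex has valency at least $3$. $\mathcal{R}_d$ is the set of quivers with no oriented cycles obtained from some $\Gamma\in\mathcal{L}_d$ by orienting some of the edges and putting a sink on each remaining edge (replacing it by a path of length two whose two arrows point towards the new middle vertex). *)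

(* Defs.v *)
From HB Require Import structures.
From mathcomp Require Import all_boot all_order all_algebra.
Set Implicit Arguments. Unset Strict Implicit. Unset Printing Implicit Defensive.
Import GRing.Theory Num.Theory.

(* Undirected multigraphs (loops and multiple edges allowed).  An edge e has
   the (unordered) pair of endpoints given by [ends e]; the order of the
   pair carries no meaning. *)
Record multigraph := Multigraph {
  gV : finType;
  gE : finType;
  ends : gE -> gV * gV }.

Definition adj (G : multigraph) : rel (gV G) :=
  fun u v => [exists e, (ends e == (u, v)) || (ends e == (v, u))].

Definition ncomp (G : multigraph) : nat := n_comp (@adj G) predT.

Definition chi (G : multigraph) : int :=
  (#|gE G|%:Z - #|gV G|%:Z + (ncomp G)%:Z)%R.

Definition connected (G : multigraph) : Prop :=
  forall u v : gV G, connect (@adj G) u v.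

(* valency: number of edge-ends at v (a loop counts twice) *)
Definition valency (G : multigraph) (v : gV G) : nat :=
  \sum_(e : gE G) (((ends e).1 == v) + ((ends e).2 == v)).

Definition in_full (G : multigraph) (A : {set gV G}) (e : gE G) : bool :=
  ((ends e).1 \in A) && ((ends e).2 \in A).

Definition one_point_union (G : multigraph) (A B : {set gV G}) : Prop :=
  [/\ A :|: B = setT,
      (forall e, in_full A e || in_full B e),
      A != setT, B != setT &
      #|A :&: B| = 1%N].

Definition prime_graph (G : multigraph) : Prop :=
  [/\ connected G, (#|gE G| > 0)%N &
      ~ exists A B : {set gV G}, one_point_union A B].

Definition in_L (d : int) (G : multigraph) : Prop :=
  [/\ prime_graph G, chi G = d & forall v : gV G, (3 <= valency v)%N].

Record quiver := Quiver {
  Q0 : finType;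
  Q1 : finType;
  qsrc : Q1 -> Q0;
  qtgt : Q1 -> Q0 }.

Definition has_oriented_cycle (Q : quiver) : Prop :=
  exists (a : Q1 Q) (p : seq (Q1 Q)),
    path (fun x y => qtgt x == qsrc y) a p /\ qtgt (last a p) = qsrc a.

(* The quiver obtained from G by putting a sink on each edge e with [sink e]
   and orienting every other edge e: from (ends e).1 to (ends e).2 if [dir e],
   and the other way otherwise. *)
Section Build.
Variables (G : multigraph) (sink : pred (gE G)) (dir : gE G -> bool).

Definition bQ0 : finType := (gV G + {e : gE G | sink e})%type.
Definition bQ1 : finType :=
  ({e : gE G | ~~ sink e} + ({e : gE G | sink e} * bool))%type.

Definition bsrc (a : bQ1) : bQ0 :=
  match a with
  | inl e => inl (if dir (val e) then (ends (val e)).1 else (ends (val e)).2)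
  | inr (e, b) => inl (if b then (ends (val e)).1 else (ends (val e)).2)
  end.

Definition btgt (a : bQ1) : bQ0 :=
  match a with
  | inl e => inl (if dir (val e) then (ends (val e)).2 else (ends (val e)).1)
  | inr (e, _) => inr e
  end.

Definition build_quiver : quiver := Quiver bsrc btgt.
End Build.

Definition quiver_iso (Q Q' : quiver) : Prop :=
  exists (f0 : Q0 Q -> Q0 Q') (f1 : Q1 Q -> Q1 Q'),
    [/\ bijective f0, bijective f1,
        forall a, qsrc (f1 a) = f0 (qsrc a) &
        forall a, qtgt (f1 a) = f0 (qtgt a)].

Definition in_R (d : int) (Q : quiver) : Prop :=
  ~ has_oriented_cycle Q /\
  exists (G : multigraph) (sink : pred (gE G)) (dir : gE G -> bool),
    in_L d G /\ quiver_iso (build_quiver sink dir) Q.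

Definition graph_iso (G G' : multigraph) : Prop :=
  exists (f0 : gV G -> gV G') (f1 : gE G -> gE G'),
    [/\ bijective f0, bijective f1 &
        forall e, ends (f1 e) = (f0 (ends e).1, f0 (ends e).2) \/
                  ends (f1 e) = (f0 (ends e).2, f0 (ends e).1)].

(* Main.v *)
Require Import Defs.
From mathcomp Require Import all_boot all_order all_algebra.
From mathcomp Require Import zify.

Lemma sum_valency (G : multigraph) : \sum_(v : gV G) valency v = 2 * #|gE G|.
Proof.
rewrite /valency exchange_big /=.
rewrite (eq_bigr (fun _ => 2)) ?sum_nat_const ?card_ord //= 1?mulnC //.
move=> e _; rewrite big_split /=.
have h (x : gV G) : \sum_(v : gV G) (x == v) = 1.
  rewrite (bigD1 x) //= eqxx big1 // => v /negbTE; by rewrite eq_sym => ->.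
by rewrite !h.
Qed.

Lemma ncomp_gt0 (G : multigraph) (x : gV G) : (0 < ncomp G)%N.
Proof.
apply/card_gt0P; exists (fingraph.root (@Defs.adj G) x); rewrite inE /= andbT.
apply: roots_root; apply: sym_connect_sym => u v.
by rewrite /Defs.adj; apply: eq_existsb => e; rewrite orbC.
Qed.

Lemma L_bounds (d : nat) (G : multigraph) : in_L d%:Z G ->
  (#|gV G| <= 2 * d - 2)%N /\ (#|gE G| <= 3 * d - 3)%N.
Proof.
case=> [[_ hE _] hchi hval].
have [e _] : exists e, e \in gE G by apply/card_gt0P.
have hnc := @ncomp_gt0 G (ends e).1.
have h3 : (3 * #|gV G| <= 2 * #|gE G|)%N.
  rewrite -sum_valency mulnC -sum_nat_const.
  by apply: leq_sum => v _; apply: hval.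
move: hchi; rewrite /chi => hchi.
lia.
Qed.

Lemma R_bounds (d : nat) (Q : quiver) : in_R d%:Z Q ->
  (#|Q0 Q| <= 5 * (d - 1))%N /\ (#|Q1 Q| <= 6 * (d - 1))%N.
Proof.
case=> _ [G [sink [dir [hL [f0 [f1 [b0 b1 _ _]]]]]]].
have [hV hE] := @L_bounds d G hL.
rewrite -(bij_eq_card b0) -(bij_eq_card b1) /= /bQ0 /bQ1.
rewrite !card_sum card_prod card_bool !card_sig.
have hc := cardC sink.
have -> : #|[pred x | ~~ sink x]| = #|[predC sink]| by apply: eq_card.
have -> : #|[pred x | sink x]| = #|sink| by apply: eq_card.
lia.
Qed.
Definition code := {n0 : nat & {n1 : nat & {ffun 'I_n1 -> 'I_n0 * 'I_n0}}}.

Lemma fin_codes (B C : nat) : exists n (P : 'I_n -> code),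
  forall n0 n1 (f : {ffun 'I_n1 -> 'I_n0 * 'I_n0}), (n0 <= B)%N -> (n1 <= C)%N ->
   exists i, P i = existT _ n0 (existT _ n1 f).
Proof.
pose T := {a : 'I_B.+1 & {b : 'I_C.+1 & {ffun 'I_b -> 'I_a * 'I_a}}}.
exists #|{: T}|.
exists (fun i => let t := @enum_val T predT i in
  existT _ (val (tag t)) (existT (fun n1 => {ffun 'I_n1 -> 'I_(val (tag t)) * 'I_(val (tag t))}) (val (tag (tagged t))) (tagged (tagged t)))).
move=> n0 n1 f h0 h1.
have h0' : (n0 < B.+1)%N by [].
have h1' : (n1 < C.+1)%N by [].
pose t : T := existT _ (Ordinal h0') (existT (fun b : 'I_C.+1 => {ffun 'I_b -> 'I_(Ordinal h0') * 'I_(Ordinal h0')}) (Ordinal h1') f).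
exists (enum_rank t).
by rewrite enum_rankK.
Qed.

Definition mkG (c : code) : multigraph :=
  match c with existT n0 (existT n1 f) => @Multigraph 'I_n0 'I_n1 f end.
Definition mkQ (c : code) : quiver :=
  match c with existT n0 (existT n1 f) =>
    @Quiver 'I_n0 'I_n1 (fun a => (f a).1) (fun a => (f a).2) end.

Lemma bij_rank (T : finType) : bijective (@enum_rank T).
Proof. exists (@enum_val T predT); [exact: enum_rankK | exact: enum_valK]. Qed.

Theorem proposition4p15 (d : nat) (hd : (2 <= d)%N) :
  (forall G : multigraph, in_L d%:Z G ->
     (#|gV G| <= 2 * d - 2)%N /\ (#|gE G| <= 3 * d - 3)%N) /\
  (forall Q : quiver, in_R d%:Z Q ->
     (#|Q0 Q| <= 5 * (d - 1))%N /\ (#|Q1 Q| <= 6 * (d - 1))%N) /\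
  (* finiteness (up to isomorphism) of L_d and R_d *)
  (exists (n : nat) (Gs : 'I_n -> multigraph),
     forall G, in_L d%:Z G -> exists i, graph_iso G (Gs i)) /\
  (exists (n : nat) (Qs : 'I_n -> quiver),
     forall Q, in_R d%:Z Q -> exists i, quiver_iso Q (Qs i)).
Proof.
split; first by move=> G; apply: L_bounds.
split; first by move=> Q; apply: R_bounds.
split.
  have [n [P HP]] := fin_codes (2 * d - 2) (3 * d - 3).
  exists n, (fun i => mkG (P i)) => G hG.
  have [hV hE] := @L_bounds d G hG.
  pose f := [ffun k : 'I_#|gE G| => (enum_rank (ends (enum_val k)).1, enum_rank (ends (enum_val k)).2)].
  have [i Hi] := HP _ _ f hV hE.
  exists i; rewrite Hi /=.
  exists (@enum_rank (gV G)), (@enum_rank (gE G)); split; try exact: bij_rank.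
  by move=> e; left; rewrite /= /f ffunE /= enum_rankK.
have [n [P HP]] := fin_codes (5 * (d - 1)) (6 * (d - 1)).
exists n, (fun i => mkQ (P i)) => Q hQ.
have [hV hE] := @R_bounds d Q hQ.
pose f := [ffun k : 'I_#|Q1 Q| => (enum_rank (qsrc (enum_val k)), enum_rank (qtgt (enum_val k)))].
have [i Hi] := HP _ _ f hV hE.
exists i; rewrite Hi /=.
exists (@enum_rank (Q0 Q)), (@enum_rank (Q1 Q)); split; try exact: bij_rank.
  by move=> a; rewrite /= /f ffunE /= enum_rankK.
by move=> a; rewrite /= /f ffunE /= enum_rankK.
Qed.
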